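(* Let $X$ be a separable Hilbert space over $K$ with orthonormal basis $\{e_j\}_{j=1,2,\ldots}\cup\{e_i^*\}_{i=1,2,\ldots}$, and let $Z$ be the proper closed subspace of $X$ with orthonormal basis $\{e_j\}$. Let $p:X\to\mathbb{R}$ be a uniformly continuous sub-additive functional with $p(0)=0$, and let $F:Z\to\mathbb{R}$ be a continuous functional with $F(0)=0$ such that $F(z_1)+F(z_2)\le p(z_1+z_2)$ for all orthogonal vectors $z_1,z_2$ lying in the union of the one-dimensional subspaces spanned by the individual $e_j$. Then there exists a continuous functional $\hat F:X\to\mathbb{R}$ with $\hat F(z)=F(z)$ for $z\in Z$ and $\hat F(x_1)+\hat F(x_2)\le p(x_1+x_2)$ for all orthogonal vectors $x_1,x_2$ lying in the union of the one-dimensional subspaces spanned by the individual $e_j$ or $e_i^*$.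
   Context: $K$ is $\mathbb{R}$ or $\mathbb{C}$. A functional $p$ is sub-additive if $p(x+y)\le p(x)+p(y)$ for all $x,y$. *)

(* Defs.v *)
From HB Require Import structures.
From mathcomp Require Import all_boot all_order all_algebra.
From mathcomp Require Import all_classical all_reals all_analysis.
From mathcomp Require Import complex.
Set Implicit Arguments. Unset Strict Implicit. Unset Printing Implicit Defensive.
Import Order.TTheory GRing.Theory Num.Theory.
Import numFieldNormedType.Exports.
Local Open Scope classical_set_scope.
Local Open Scope ring_scope.

(* [ip] is an inner product on the normed space X over K (with conjugation
   [conjK]: the identity for K = R, complex conjugation for K = C), linear in
   the first argument, conjugate-symmetric, and inducing the norm of X.
   Together with completeness of X this makes X a Hilbert space. *)
Definition inner_product (K : numFieldType) (conjK : K -> K)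
    (X : normedModType K) (ip : X -> X -> K) : Prop :=
  [/\ forall (a : K) (x1 x2 y : X), ip (a *: x1 + x2) y = a * ip x1 y + ip x2 y,
      forall x y : X, ip y x = conjK (ip x y)
    & forall x : X, `|x| ^+ 2 = ip x x].

Definition lspan (K : numFieldType) (X : normedModType K) (I : Type)
    (e : I -> X) : set X :=
  [set x | exists (s : seq I) (c : I -> K), x = \sum_(i <- s) c i *: e i].

Definition clspan (K : numFieldType) (X : normedModType K) (I : Type)
    (e : I -> X) : set X := closure (lspan e).

Definition orthonormal_basis (K : numFieldType) (X : normedModType K)
    (ip : X -> X -> K) (I : Type) (e : I -> X) : Prop :=
  [/\ forall i, ip (e i) (e i) = 1,
      forall i j, i <> j -> ip (e i) (e j) = 0
    & clspan e = setT].

Definition on_lines (K : numFieldType) (X : normedModType K) (I : Type)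
    (e : I -> X) : set X :=
  [set x | exists (i : I) (c : K), x = c *: e i].

Definition join_basis (T : Type) (e es : nat -> T) (k : nat + nat) : T :=
  match k with inl j => e j | inr i => es i end.

Definition theorem5_stmt (K : numFieldType) (conjK : K -> K) (R : realType)
    : Prop :=
  forall (X : completeNormedModType K) (ip : X -> X -> K),
  inner_product conjK ip ->
  forall e es : nat -> X,
  orthonormal_basis ip (join_basis e es) ->
  forall p : X -> R,
  unif_continuous p ->
  (forall x y : X, p (x + y) <= p x + p y) ->
  p 0 = 0 ->
  forall F : X -> R,   (* only its values on Z = clspan e matter *)
  {within clspan e, continuous F} ->
  F 0 = 0 ->
  (forall z1 z2 : X, on_lines e z1 -> on_lines e z2 -> ip z1 z2 = 0 ->
     F z1 + F z2 <= p (z1 + z2)) ->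
  exists Fh : X -> R,
    [/\ continuous Fh,
        forall z : X, clspan e z -> Fh z = F z
      & forall x1 x2 : X, on_lines (join_basis e es) x1 ->
          on_lines (join_basis e es) x2 -> ip x1 x2 = 0 ->
          Fh x1 + Fh x2 <= p (x1 + x2)].

(* Main.v *)
Require Import Defs.
From HB Require Import structures.
From mathcomp Require Import all_boot all_order all_algebra.
From mathcomp Require Import all_classical all_reals all_analysis.
From mathcomp Require Import complex.
From mathcomp Require Import ring lra.
Import Order.TTheory GRing.Theory Num.Theory.
Import numFieldNormedType.Exports.
Local Open Scope ring_scope.

Section Unif.
Local Open Scope classical_set_scope.
Lemma unif_cont_cont (U V : uniformType) (f : U -> V) : unif_continuous f -> continuous f.
Proof.
move=> uf x A; rewrite -!nbhs_entourageE => -[B entB BA].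
exists ((fun xy => (f xy.1, f xy.2)) @^-1` B); first exact: uf.
by move=> y /= Bxy; apply: BA.
Qed.
End Unif.

Section Phi.
Context (R : realType).
Definition phi (t : R) : R := t / (1 + `|t|).
Definition psi (s : R) : R := s / (1 - `|s|).

Lemma phi_cont : continuous phi.
Proof.
move=> t; apply: cvgM; first exact: cvg_id.
apply: cvgV; first by rewrite gt_eqF // ltr_pwDl.
apply: cvgD; first exact: cvg_cst.
exact: cvg_norm.
Qed.

Lemma psi_cont s : `|s| < 1 -> {for s, continuous psi}.
Proof.
move=> s1; apply: cvgM; first exact: cvg_id.
apply: cvgV; first by rewrite subr_eq0 eq_sym lt_eqF.
apply: cvgB; first exact: cvg_cst.
exact: cvg_norm.
Qed.

Lemma phi_lt1 t : `|phi t| < 1.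
Proof.
rewrite /phi normrM normfV [`|1 + _|]ger0_norm; last by rewrite addr_ge0.
by rewrite ltr_pdivrMr ?mul1r ?ltrDr // ltr_pwDl.
Qed.

Lemma psiK t : psi (phi t) = t.
Proof.
rewrite /psi /phi normrM normfV [`|1 + _|]ger0_norm; last by rewrite addr_ge0.
have h : 0 < 1 + `|t| by rewrite ltr_pwDl.
have -> : 1 - `|t| / (1 + `|t|) = (1 + `|t|)^-1.
  by field; rewrite gt_eqF.
by rewrite invrK mulrVK // unitfE gt_eqF.
Qed.
End Phi.
Arguments phi {R}. Arguments psi {R}. Arguments phi_cont {R}. Arguments psi_cont {R}. Arguments phi_lt1 {R}. Arguments psiK {R}.

Section Dist.
Local Open Scope classical_set_scope.
Context (K : numFieldType) (R : realType) (X : normedModType K) (N : X -> R).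
Hypotheses (N0 : N 0 = 0) (Nge0 : forall x, 0 <= N x)
  (NB : forall x y, N (x + y) <= N x + N y) (NN : forall x, N (- x) = N x)
  (Neq0 : forall x, N x = 0 -> x = 0)
  (Nnbhs : forall x (A : set X), nbhs x A <->
     exists2 r : R, 0 < r & forall y, N (x - y) < r -> A y).

Definition dist (A : set X) (x : X) : R := inf [set N (x - a) | a in A].

Lemma dist_ge0 A x : 0 <= dist A x.
Proof.
have [->|/set0P[a Aa]] := eqVneq A set0.
  by rewrite /dist image_set0 inf0.
apply: lb_le_inf; first by exists (N (x - a)), a.
by move=> _ [b _ <-].
Qed.

Lemma dist_le A x a : A a -> dist A x <= N (x - a).
Proof.
move=> Aa; apply: ge_inf; last by exists a.
by exists 0 => _ [b _ <-].
Qed.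

Lemma dist_lip A x y : A !=set0 -> dist A x <= N (x - y) + dist A y.
Proof.
move=> [a0 Aa0]; rewrite -lerBlDl; apply: lb_le_inf.
  by exists (N (y - a0)), a0.
move=> _ [a Aa <-]; rewrite lerBlDl; apply: (le_trans ((@dist_le A x a Aa))).
by have := NB (x - y) (y - a); rewrite addrA subrK.
Qed.

Lemma dist_cont A : continuous (dist A).
Proof.
have [->|A0] := eqVneq A set0.
  have -> : dist set0 = fun=> 0 by apply/funext => x; rewrite /dist image_set0 inf0.
  by move=> x; exact: cvg_cst.
move/set0P: A0 => A0.
move=> x; apply/cvgrPdist_lt => eps eps0.
apply/Nnbhs; exists eps => // y Hy.
have h1 := @dist_lip A y x A0; have h2 := @dist_lip A x y A0.
have e : N (y - x) = N (x - y) by rewrite -NN opprB.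
rewrite e in h1.
rewrite ltr_norml; apply/andP; split; lra.
Qed.

Lemma dist0_closure A x : A !=set0 -> dist A x = 0 -> closure A x.
Proof.
move=> A0 d0 B /Nnbhs [r r0 HB].
have [_ [a Aa <-] Hlt] := @inf_lt _ [set N (x - a) | a in A] r (image_nonempty _ A0) ltac:(by rewrite -/(dist A x) d0).
by exists a; split => //; apply: HB.
Qed.

Lemma dist_pos A x : closed A -> A !=set0 -> ~ A x -> 0 < dist A x.
Proof.
move=> cA A0 nAx; rewrite lt_neqAle dist_ge0 andbT; apply/eqP => /esym d0.
by apply: nAx; have -> := (closure_id A).1 cA; exact: dist0_closure.
Qed.

Lemma dist0 A x : A x -> dist A x = 0.
Proof.
move=> Ax; apply/eqP; rewrite eq_le dist_ge0 andbT.
by have := @dist_le A x x Ax; rewrite subrr N0.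
Qed.

Lemma normalX : normal_space X.
Proof.
apply/(@normal_openP R) => A B cA cB AB0.
have [->|/set0P A0] := eqVneq A set0.
  exists set0, setT; split => //; [exact: open0|exact: openT|by rewrite set0I].
have [->|/set0P B0] := eqVneq B set0.
  exists setT, set0; split => //; [exact: openT|exact: open0|by rewrite setI0].
have oL (C D : set X) : open [set x | dist C x < dist D x].
  have -> : [set x | dist C x < dist D x] =
      (fun x => dist D x - dist C x) @^-1` [set r | 0 < r].
    by apply/seteqP; split => x /=; rewrite subr_gt0.
  apply: open_comp; last exact: open_gt.
  by move=> x _; apply: cvgB; exact: dist_cont.
exists [set x | dist A x < dist B x], [set x | dist B x < dist A x]; split.
- exact: oL.
- exact: oL.
- move=> x Ax; rewrite /= dist0 //; apply: dist_pos => // Bx.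
  by have : (A `&` B) x by []; rewrite AB0.
- move=> x Bx; rewrite /= (@dist0 B x Bx); apply: dist_pos => // Ax.
  by have : (A `&` B) x by []; rewrite AB0.
- by apply/seteqP; split => x //= [h1 h2]; have := lt_trans h1 h2; rewrite ltxx.
Qed.


Lemma N_lip x y : N x <= N (x - y) + N y.
Proof. by have := NB (x - y) y; rewrite subrK. Qed.

Lemma N_cont : continuous N.
Proof.
move=> x; apply/cvgrPdist_lt => eps eps0.
apply/Nnbhs; exists eps => // y Hy.
have h1 := N_lip x y; have h2 := N_lip y x.
have e : N (y - x) = N (x - y) by rewrite -NN opprB.
rewrite e in h2.
rewrite ltr_norml; apply/andP; split; lra.
Qed.

Lemma tietze_ext (Z : set X) (F : X -> R) : closed Z -> Z !=set0 ->
  {within Z, continuous F} ->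
  exists G : X -> R, continuous G /\ forall z, Z z -> G z = F z.
Proof.
move=> cZ Z0 cF.
have cf : {within Z, continuous (phi \o F)}.
  by move=> x; apply: (@continuous_comp (subspace Z) R R F (phi)); [exact: cF | exact: phi_cont].
have [g [gf cg gb]] := @continuous_bounded_extension X R normalX Z cZ (phi \o F) 1 ltr01 cf
   (fun x _ => ltW (phi_lt1 (F x))).
pose g' x := g x / (1 + dist Z x).
have g'lt x : `|g' x| < 1.
  case: (pselect (Z x)) => Zx.
    rewrite /g' dist0 // addr0 divr1 -gf; [exact: phi_lt1 | by rewrite inE].
  have dp := @dist_pos Z x cZ Z0 Zx.
  rewrite /g' normrM normfV [`|1 + _|]ger0_norm; last by rewrite addr_ge0 // ltW.
  rewrite ltr_pdivrMr; last by rewrite ltr_pwDl // dist_ge0.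
  rewrite mul1r.
  by apply: (le_lt_trans (gb x)); rewrite ltrDl.
exists (psi \o g'); split.
  move=> x; apply: continuous_comp; last exact: psi_cont.
  rewrite /g'; apply: cvgM; first exact: cg.
  apply: cvgV; first by rewrite gt_eqF // ltr_pwDl // dist_ge0.
  by apply: cvgD; [exact: cvg_cst | exact: dist_cont].
move=> z Zz; rewrite /= /g' dist0 // addr0 divr1 -gf ?psiK //.
by rewrite inE.
Qed.

Lemma extA (Z E : set X) (p F : X -> R) :
  closed Z -> Z 0 -> (forall x z, E x -> Z z -> N x <= N (x - z)) ->
  continuous p -> p 0 = 0 ->
  {within Z, continuous F} -> F 0 = 0 ->
  exists Fh : X -> R, [/\ continuous Fh, forall z, Z z -> Fh z = F z
    & forall x, E x -> Fh x <= - p (- x)].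
Proof.
move=> cZ Z0 EZ cp p0 cF F0.
have [G [cG GF]] := @tietze_ext Z F cZ (ex_intro _ 0 Z0) cF.
pose h x := G x + p (- x).
pose B x := (h x + `|h x|) / 2.
pose ps x := dist Z x / N x.
have ch : continuous h.
  move=> x; apply: cvgD; first exact: cG.
  apply: (@continuous_comp _ _ _ (fun y : X => - y) p); last exact: cp.
  exact: (cvgN cvg_id).
have cB : continuous B.
  move=> x; apply: cvgM; last exact: cvg_cst.
  by apply: cvgD; [exact: ch| apply: cvg_norm; exact: ch].
have B0 : B 0 = 0 by rewrite /B /h oppr0 p0 GF // F0 addr0 normr0 addr0 mul0r.
have G0 : G 0 = 0 by rewrite GF.
have Bge0 x : 0 <= B x.
  have := ler_norm (- h x); rewrite normrN => H; rewrite /B divr_ge0 //; lra.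
have Bgeh x : h x <= B x.
  rewrite /B ler_pdivlMr // mulr_natr mulr2n lerD2l; exact: ler_norm.
have ps01 x : 0 <= ps x <= 1.
  rewrite /ps; have [->|Nx] := eqVneq (N x) 0.
    by rewrite invr0 mulr0 lexx ler01.
  have Np : 0 < N x by rewrite lt_neqAle eq_sym Nx Nge0.
  rewrite divr_ge0 ?dist_ge0 //= ler_pdivrMr // mul1r.
  by have := @dist_le Z x 0 Z0; rewrite subr0.
exists (fun x => G x - ps x * B x); split.
- move=> x; have [->|x0] := eqVneq x 0.
    rewrite /continuous_at /= G0 B0 mulr0 subr0.
    apply/cvgrPdist_lt => eps e0.
    have e2 : 0 < eps / 2 by rewrite divr_gt0.
    move/cvgrPdist_lt: (cG 0) => /(_ _ e2) hG.
    move/cvgrPdist_lt: (cB 0) => /(_ _ e2) hB.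
    near=> y.
    have h1 : `|G 0 - G y| < eps / 2 by near: y.
    have h2 : `|B 0 - B y| < eps / 2 by near: y.
    rewrite G0 sub0r normrN in h1; rewrite B0 sub0r normrN ger0_norm // in h2.
    have /andP[q0 q1] := ps01 y.
    rewrite sub0r normrN (le_lt_trans (ler_normB _ _)) //.
    rewrite normrM [`|ps y|]ger0_norm // [`|B y|]ger0_norm //.
    have : ps y * B y <= B y by rewrite ler_piMl.
    lra.
  have Nx0 : N x != 0 by apply/eqP => /Neq0; apply/eqP.
  apply: cvgB; first exact: cG.
  apply: cvgM; last exact: cB.
  apply: cvgM; first exact: dist_cont.
  by apply: cvgV => //; exact: N_cont.
- move=> z Zz; by rewrite /ps dist0 // mul0r mul0r subr0 GF.
- move=> x Ex; have [->|x0] := eqVneq x 0.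
    by rewrite G0 B0 mulr0 subr0 oppr0 p0 oppr0.
  have Nx0 : N x != 0 by apply/eqP => /Neq0; apply/eqP.
  have -> : ps x = 1.
    rewrite /ps; have -> : dist Z x = N x; last by rewrite divff.
    apply/eqP; rewrite eq_le; apply/andP; split.
      by have := @dist_le Z x 0 Z0; rewrite subr0.
    apply: lb_le_inf; first by exists (N (x - 0)), 0.
    by move=> _ [z Zz <-]; exact: EZ.
  by rewrite mul1r; have := Bgeh x; rewrite /h; lra.
Unshelve. all: by end_near.
Qed.
End Dist.

Section IP.
Local Open Scope classical_set_scope.
Context (K : numFieldType) (conjK : K -> K) (X : normedModType K)
  (ip : X -> X -> K) (Hip : inner_product conjK ip).

Lemma ipDl x1 x2 y : ip (x1 + x2) y = ip x1 y + ip x2 y.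
Proof. by case: Hip => H _ _; have := H 1 x1 x2 y; rewrite scale1r mul1r. Qed.

Lemma ip0l y : ip 0 y = 0.
Proof.
have := ipDl 0 0 y; rewrite addr0 => /eqP; rewrite -subr_eq0 => /eqP.
by rewrite opprD addrA subrr sub0r => /eqP; rewrite oppr_eq0 => /eqP.
Qed.

Lemma ipZl a x y : ip (a *: x) y = a * ip x y.
Proof. by case: Hip => H _ _; have := H a x 0 y; rewrite addr0 ip0l addr0. Qed.

Lemma ipNl x y : ip (- x) y = - ip x y.
Proof. by rewrite -scaleN1r ipZl mulN1r. Qed.

Lemma ipBl x z y : ip (x - z) y = ip x y - ip z y.
Proof. by rewrite ipDl ipNl. Qed.

Lemma ipC x y : ip y x = conjK (ip x y).
Proof. by case: Hip. Qed.

Lemma ipn x : `|x| ^+ 2 = ip x x.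
Proof. by case: Hip. Qed.

Lemma conj0 : conjK 0 = 0.
Proof. by rewrite -(ip0l 0) -ipC. Qed.

Lemma conj_ipxx x : conjK (ip x x) = ip x x.
Proof. by rewrite -ipC. Qed.

Lemma conj_Nipxx x : conjK (- ip x x) = - ip x x.
Proof.
have e1 : ip x (- x) = - ip x x.
  have -> : ip x (- x) = ip (- (- x)) (- x) by rewrite opprK.
  by rewrite ipNl -ipn normrN ipn.
by rewrite -ipNl -ipC e1 ipNl.
Qed.

Lemma ip_suml (I : Type) (s : seq I) (c : I -> K) (e : I -> X) y :
  ip (\sum_(i <- s) c i *: e i) y = \sum_(i <- s) c i * ip (e i) y.
Proof.
elim: s => [|i s IH]; first by rewrite !big_nil ip0l.
by rewrite !big_cons ipDl ipZl IH.
Qed.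

Lemma ip0r x : ip x 0 = 0.
Proof. by rewrite ipC ip0l conj0. Qed.

Lemma pyth_le (e es : nat -> X) : orthonormal_basis ip (join_basis e es) ->
  forall i c z, lspan e z -> `|c *: es i| <= `|c *: es i - z|.
Proof.
case=> _ orth _ i c z [s [d ->]].
set a := c *: es i; set w := \sum_(j <- s) d j *: e j.
have hza : ip w a = 0.
  rewrite ip_suml big1_seq // => j _.
  rewrite ipC /a ipZl.
  have -> : ip (es i) (e j) = 0 by exact: (orth (inr i) (inl j)).
  by rewrite mulr0 conj0 mulr0.
have haz : ip a w = 0 by rewrite ipC hza conj0.
have h : `|a - w| ^+ 2 = `|a| ^+ 2 + `|w| ^+ 2.
  rewrite !ipn ipBl.
  rewrite [ip a (a - w)]ipC ipBl hza subr0 conj_ipxx.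
  by rewrite [ip w (a - w)]ipC ipBl haz sub0r conj_Nipxx opprK.
rewrite -(@ler_pXn2r _ 2) ?nnegrE // h lerDl.
exact: exprn_ge0.
Qed.
End IP.

Section Assembly.
Local Open Scope classical_set_scope.
Context (K : numFieldType) (conjK : K -> K) (R : realType) (toR : K -> R).
Hypotheses (T0 : toR 0 = 0) (TD : forall a b, toR (a + b) = toR a + toR b)
  (Tle : forall a b : K, a <= b -> toR a <= toR b)
  (Tpos : forall k : K, 0 <= k -> toR k = 0 -> k = 0)
  (Ta : forall e : K, 0 < e -> exists2 r : R, 0 < r &
          forall k, 0 <= k -> toR k < r -> k < e)
  (Tb : forall r : R, 0 < r -> exists2 e : K, 0 < e &
          forall k, 0 <= k -> k < e -> toR k < r).

Lemma stmt_gen : theorem5_stmt conjK R.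
Proof.
move=> X ip Hip e es onb p up psub p0 F cF F0 Fhyp.
pose N := fun x : X => toR `|x|.
have N0 : N 0 = 0 by rewrite /N normr0 T0.
have Nge0 x : 0 <= N x by rewrite -T0 /N; apply: Tle.
have NB x y : N (x + y) <= N x + N y by rewrite /N -TD; apply: Tle; exact: ler_normD.
have NN x : N (- x) = N x by rewrite /N normrN.
have Neq0 x : N x = 0 -> x = 0 by move=> /Tpos => /(_ (normr_ge0 x)) /normr0_eq0.
have Nmono (u v : X) : `|u| <= `|v| -> N u <= N v by move=> h; apply: Tle.
have Nnbhs (x : X) (A : set X) : nbhs x A <->
    exists2 r : R, 0 < r & forall y, N (x - y) < r -> A y.
  rewrite nbhs_ballP; split.
    move=> [eps eps0 hA]; have [r r0 hr] := Ta _ eps0.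
    exists r => // y hy; apply: hA; rewrite -ball_normE /=.
    exact: hr.
  move=> [r r0 hA]; have [eps eps0 he] := Tb _ r0.
  exists eps => // y; rewrite -ball_normE /= => hy; apply: hA.
  exact: he.
have cp : continuous p := @unif_cont_cont _ _ p up.
pose Z := clspan e.
pose E := [set x : X | exists i c, x = c *: es i].
have cZ : closed Z by exact: closed_closure.
have lsp0 : lspan e 0 by exists [::], (fun=> 0); rewrite big_nil.
have Z0 : Z 0 by exact: subset_closure.
have lineZ j c : Z (c *: e j).
  apply: subset_closure; exists [:: j], (fun=> c); by rewrite big_seq1.
have EZ x z : E x -> Z z -> N x <= N (x - z).
  move=> [i [c ->]] Zz; apply/ler_addgt0Pr => eps eps0.
  have : nbhs z [set y | N (z - y) < eps] by apply/Nnbhs; exists eps.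
  move=> /Zz [z' [lz' hz']].
  apply: (le_trans (Nmono _ _ (@pyth_le _ _ _ _ Hip _ _ onb i c _ lz'))).
  apply: (le_trans _ (lerD (lexx _) (ltW hz'))).
  by have := NB (c *: es i - z) (z - z'); rewrite addrA subrK.
have [Fh [cFh FhZ FhE]] := @extA K R X N N0 Nge0 NB NN Neq0 Nnbhs Z E p F cZ Z0 EZ cp p0 cF F0.
have Fle j c : F (c *: e j) <= p (c *: e j).
  have := Fhyp (c *: e j) 0 (ex_intro _ j (ex_intro _ c erefl))
     (ex_intro _ 0%N (ex_intro _ 0 (esym (scale0r _)))) (@ip0r _ _ _ _ Hip _).
  by rewrite F0 !addr0.
exists Fh; split => //.
move=> x1 x2 [[j1|i1] [c1 ->]] [[j2|i2] [c2 ->]] /= ho.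
- rewrite !FhZ //; apply: Fhyp => //.
  + by exists j1, c1.
  + by exists j2, c2.
- rewrite FhZ //; have h1 := Fle j1 c1.
  have h2 := FhE (c2 *: es i2) (ex_intro _ i2 (ex_intro _ c2 erefl)).
  have h3 := psub (c1 *: e j1 + c2 *: es i2) (- (c2 *: es i2)).
  rewrite addrK in h3; lra.
- rewrite [Fh (c2 *: e j2)]FhZ //; have h1 := Fle j2 c2.
  have h2 := FhE (c1 *: es i1) (ex_intro _ i1 (ex_intro _ c1 erefl)).
  have h3 := psub (c1 *: es i1 + c2 *: e j2) (- (c1 *: es i1)).
  rewrite addrC addKr in h3. rewrite addrC; lra.
- have h1 := FhE (c1 *: es i1) (ex_intro _ i1 (ex_intro _ c1 erefl)).
  have h2 := FhE (c2 *: es i2) (ex_intro _ i2 (ex_intro _ c2 erefl)).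
  have h3 := psub (c1 *: es i1 + c2 *: es i2) (- (c1 *: es i1 + c2 *: es i2)).
  have h4 := psub (- (c1 *: es i1)) (- (c2 *: es i2)).
  rewrite subrr p0 opprD in h3; lra.
Qed.
End Assembly.

Section Final.
Local Open Scope classical_set_scope.
Lemma stmt_real (R : realType) : theorem5_stmt (fun x : R => x) R.
Proof.
apply: (@stmt_gen R (fun x : R => x) R (fun x => x)) => //.
- by move=> e e0; exists e.
- by move=> r r0; exists r.
Qed.

Lemma stmt_cplx (R : realType) : theorem5_stmt (fun z : R[i] => z^*) R.
Proof.
apply: (@stmt_gen R[i] (fun z : R[i] => z^*) R (@complex.Re R)) => //.
- by case=> a b [c d].
- by case=> a b [c d]; rewrite lecE /= => /andP[_].
- case=> a b; rewrite lecE /= => /andP[/eqP b0 _] a0.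
  by rewrite /= in a0 b0; rewrite a0 b0.
- case=> a b; rewrite ltcE /= => /andP[/eqP b0 a0].
  exists a => // -[c d]; rewrite lecE ltcE /= => /andP[/eqP d0 _] ca.
  by rewrite b0 d0 eqxx ca.
- move=> r r0; exists (r%:C)%C; first by rewrite ltcR.
  by case=> a b; rewrite lecE ltcE /= => /andP[_ _] /andP[_].
Qed.
End Final.

Theorem theorem5 (R : realType) :
  theorem5_stmt (fun x : R => x) R /\
  theorem5_stmt (fun z : R[i] => z^*) R.
Proof. by split; [exact: stmt_real | exact: stmt_cplx]. Qed.
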